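(* Let $\widetilde{A}=(\widetilde a_{ij})$ be a real symmetric $N\times N$ matrix with nonnegative entries and zero diagonal ($\widetilde a_{jj}=0$ for all $j$), let $\widetilde d_j=\sum_{k=1}^N \widetilde a_{jk}$ and $\widetilde\Delta=\operatorname{diag}(\widetilde d_1,\dots,\widetilde d_N)$. Fix a node $q$ such that $\widetilde d_k\neq \widetilde d_q$ for every $k\neq q$. Then for $\zeta$ in a neighbourhood of $0$ the matrix $\widetilde\Delta+\zeta\widetilde A$ has an eigenvalue $\xi_q(\zeta)$ that is analytic in $\zeta$ with $\xi_q(0)=\widetilde d_q$, and its Taylor expansion is $$\xi_q(\zeta)=\widetilde d_q+c_2(q)\zeta^2+c_3(q)\zeta^3+c_4(q)\zeta^4+O(\zeta^5)$$ (i.e. the coefficient of $\zeta$ vanishes), where $$c_2(q)=\sum_{k\neq q}\frac{\widetilde a_{kq}^2}{\widetilde d_q-\widetilde d_k},\qquad c_3(q)=\sum_{r\neq q}\frac{\widetilde a_{rq}}{\widetilde d_q-\widetilde d_r}\sum_{k\neq q}\frac{\widetilde a_{kq}\widetilde a_{kr}}{\widetilde d_q-\widetilde d_k},$$ $$c_4(q)=\sum_{r\neq q}\frac{\widetilde a_{rq}}{\widetilde d_q-\widetilde d_r}\sum_{l\neq q}\frac{\widetilde a_{rl}}{\widetilde d_q-\widetilde d_l}\sum_{k\neq q}\frac{\widetilde a_{kq}\widetilde a_{kl}}{\widetilde d_q-\widetilde d_k}-\sum_{r\neq q}\frac{\widetilde a_{rq}^2}{(\widetilde d_q-\widetilde d_r)^2}\sum_{k\neq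 q}\frac{\widetilde a_{kq}^2}{\widetilde d_q-\widetilde d_k},$$ all sums running over indices in $\{1,\dots,N\}$. In particular, for a simple unweighted graph with zero-one adjacency matrix $A$ and degrees $d_j$, $c_2(q)=\sum_{k\in\mathcal N_q}\frac{1}{d_q-d_k}$ and $c_3(q)=\sum_{r\in\mathcal N_q}\sum_{k\in\mathcal N_q\cap\mathcal N_r}\frac{1}{(d_q-d_r)(d_q-d_k)}$, where $\mathcal N_j$ is the set of neighbours of node $j$.
   Context: $\widetilde A$ is the (weighted) adjacency matrix of an undirected graph without self-loops, $\widetilde d_j$ the strength (weighted degree) of node $j$; the Laplacian is $\widetilde\Delta-\widetilde A$ (the case $\zeta=-1$). The hypothesis says the degree of node $q$ is unique, so $\widetilde d_q$ is a simple eigenvalue of $\widetilde\Delta$. *)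

(* Defs.v *)
From HB Require Import structures.
From mathcomp Require Import all_boot all_order all_algebra.
From mathcomp Require Import all_classical all_reals all_analysis.
Set Implicit Arguments. Unset Strict Implicit. Unset Printing Implicit Defensive.
Import Order.TTheory GRing.Theory Num.Theory.
Local Open Scope ring_scope.

Section Defs.
Variables (R : realType) (N : nat).
Implicit Types (A : 'M[R]_N) (q : 'I_N).

Definition strength A (j : 'I_N) : R := \sum_(k < N) A j k.

Definition pert_mx A (z : R) : 'M[R]_N :=
  diag_mx (\row_j strength A j) + z *: A.

Definition c2 A q : R :=
  \sum_(k < N | k != q) (A k q) ^+ 2 / (strength A q - strength A k).

Definition c3 A q : R :=
  \sum_(r < N | r != q) (A r q / (strength A q - strength A r)) *
    \sum_(k < N | k != q) (A k q * A k r / (strength A q - strength A k)).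

Definition c4 A q : R :=
  (\sum_(r < N | r != q) (A r q / (strength A q - strength A r)) *
    \sum_(l < N | l != q) (A r l / (strength A q - strength A l)) *
      \sum_(k < N | k != q) (A k q * A k l / (strength A q - strength A k)))
  - (\sum_(r < N | r != q) (A r q) ^+ 2 / (strength A q - strength A r) ^+ 2) *
    \sum_(k < N | k != q) (A k q) ^+ 2 / (strength A q - strength A k).

End Defs.

(* Main.v *)
Require Import Defs.
From HB Require Import structures.
From mathcomp Require Import all_boot all_order all_algebra.
From mathcomp Require Import all_classical all_reals all_analysis.
From mathcomp Require Import ring lra zify.
Import Order.TTheory GRing.Theory Num.Theory.
Import numFieldNormedType.Exports.
Local Open Scope classical_set_scope.
Local Open Scope ring_scope.
Set Implicit Arguments. Unset Strict Implicit. Unset Printing Implicit Defensive.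
Lemma geo_cvg (R : realType) (u : nat -> R) (B t : R) :
  0 <= t -> t < 1 -> 0 <= B -> (forall n, `|u n| <= B * t ^+ n) ->
  cvgn (series u).
Proof.
move=> t0 t1 B0 hb; apply: normed_cvg.
apply: (@series_le_cvg R (fun n => `|u n|) (geometric B t)).
- by move=> n; exact: normr_ge0.
- by move=> n; rewrite /geometric /= mulr_ge0 // exprn_ge0.
- by move=> n; exact: hb.
- by apply: is_cvg_geometric_series; rewrite ger0_norm.
Qed.

Lemma cvg0_bound (R : realType) (f g : nat -> R) :
  (forall n, `|f n| <= g n) -> g @ \oo --> 0 -> f @ \oo --> 0.
Proof.
move=> hb hg; apply/norm_cvg0P.
apply: (squeeze_cvgr _ (cvg_cst 0) hg).
by apply: nearW => n; rewrite normr_ge0 hb.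
Qed.

Lemma cvg_fsum (R : realType) (I : finType) (F : I -> nat -> R) (l : I -> R) :
  (forall j, F j @ \oo --> l j) ->
  (fun n => \sum_j F j n) @ \oo --> \sum_j l j.
Proof.
move=> hF; rewrite unlock /=.
elim: (index_enum I) => [|j r IH] /=.
  exact: cvg_cst.
exact: (cvgD (hF j) IH).
Qed.
Section Rec.
Variables (R : realType) (N : nat) (A : 'M[R]_N) (q : 'I_N).

Definition dd (j : 'I_N) : R := strength A j.
Definition gg (k : 'I_N) : R := if k == q then 0 else (dd q - dd k)^-1.

Fixpoint hist (n : nat) : (nat -> R) * (nat -> 'I_N -> R) :=
  if n is n'.+1 then
    let L := (hist n').1 in let V := (hist n').2 in
    let l := \sum_j V n' j * A j q in
    let v := fun k => gg k * (\sum_j V n' j * A j k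
                    - \sum_(m < n') L m.+1 * V (n' - m)%N k) in
    (fun m => if m == n'.+1 then l else L m,
     fun m => if m == n'.+1 then v else V m)
  else (fun _ => 0, fun _ k => if k == q then 1 else 0).

Definition lam n := (hist n).1 n.
Definition vec n := (hist n).2 n.

Lemma hist_stable n m : (m <= n)%N -> (hist n).1 m = lam m /\ (hist n).2 m = vec m.
Proof.
elim: n => [|n IH]; first by rewrite leqn0 => /eqP ->.
rewrite leq_eqVlt => /orP[/eqP ->|]; first by [].
move=> hm; have [h1 h2] := IH hm; rewrite /= ltn_eqF //.
Qed.

Lemma lam0 : lam 0 = 0. Proof. by []. Qed.
Lemma vec0 k : vec 0 k = if k == q then 1 else 0. Proof. by []. Qed.
Lemma lamS n : lam n.+1 = \sum_j vec n j * A j q.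
Proof.
rewrite /lam /= eqxx; apply: eq_bigr => j _.
by have [_ ->] := hist_stable (leqnn n).
Qed.
Lemma vecS n k : vec n.+1 k = gg k * (\sum_j vec n j * A j k
                    - \sum_(m < n) lam m.+1 * vec (n - m)%N k).
Proof.
rewrite /vec /= eqxx. congr (_ * (_ - _)).
apply: eq_bigr => m _.
have [-> _] := hist_stable (ltn_ord m).
by have [_ ->] := hist_stable (leq_subr m n).
Qed.
End Rec.
Lemma inv_sq_sum (R : realType) n :
  \sum_(m < n) ((m.+1)%:R ^+ 2 : R)^-1 <= 2 - 2 / (n.+1)%:R.
Proof.
elim: n => [|n IH]; first by rewrite big_ord0 divr1 subrr.
rewrite big_ord_recr /=.
apply: le_trans (lerD IH (lexx _)) _.
rewrite -addrA lerD2l.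
have h1 : (0 : R) < n.+1%:R by rewrite ltr0n.
have h2 : (0 : R) < n.+2%:R by rewrite ltr0n.
have e : (n.+2%:R : R) = n.+1%:R + 1 by rewrite -natr1.
rewrite e; rewrite e in h2.
set x : R := n.+1%:R in h1 h2 *.
rewrite -subr_ge0.
have -> : - (2 / (x + 1)) - (- (2 / x) + (x ^+ 2)^-1) = (x - 1) / (x ^+ 2 * (x + 1)).
  by field; rewrite ?gt_eqF // ?mulf_neq0 ?expf_neq0 ?gt_eqF.
apply: divr_ge0; last by rewrite mulr_ge0 // ?exprn_ge0 ?ltW.
by rewrite subr_ge0 /x ler1n.
Qed.
Lemma pw_ineq (R : realType) (a b : R) : 0 < a -> 0 < b ->
  ((a ^+ 2 * b ^+ 2))^-1 <= 2 * ((a ^+ 2)^-1 + (b ^+ 2)^-1) / (a + b) ^+ 2.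
Proof.
move=> ha hb.
have hab : 0 < a + b by rewrite addr_gt0.
have -> : 2 * ((a ^+ 2)^-1 + (b ^+ 2)^-1) / (a + b) ^+ 2
   = (2 * (a ^+ 2 + b ^+ 2) / (a + b) ^+ 2) * (a ^+ 2 * b ^+ 2)^-1.
  by field; rewrite ?gt_eqF.
rewrite ler_peMl //; first by rewrite invr_ge0 mulr_ge0 // exprn_ge0 // ltW.
rewrite ler_pdivlMr ?exprn_gt0 // mul1r -subr_ge0.
have -> : 2 * (a ^+ 2 + b ^+ 2) - (a + b) ^+ 2 = (a - b) ^+ 2 by ring.
exact: sqr_ge0.
Qed.

Lemma key_sum (R : realType) n :
  \sum_(m < n.+1) (((m.+1)%:R : R) ^+ 2 * ((n - m).+1)%:R ^+ 2)^-1
    <= 8 / ((n.+2)%:R ^+ 2).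
Proof.
have step : forall m : 'I_n.+1,
   (((m.+1)%:R : R) ^+ 2 * ((n - m).+1)%:R ^+ 2)^-1
    <= 2 / (n.+2)%:R ^+ 2 * (((m.+1)%:R ^+ 2)^-1 + (((n - m).+1)%:R ^+ 2)^-1).
  move=> m.
  have -> : (n.+2%:R : R) = (m.+1)%:R + (n - m).+1%:R.
    by rewrite -natrD; congr (_ %:R); have := ltn_ord m; lia.
  rewrite [X in _ <= X]mulrAC.
  have := @pw_ineq R (m.+1%:R) ((n-m).+1%:R); rewrite !ltr0n => /(_ isT isT) h; exact: h.
apply: le_trans (ler_sum _ (fun m _ => step m)) _.
rewrite -mulr_sumr big_split /=.
have -> : \sum_(i < n.+1) (((n - i).+1)%:R ^+ 2 : R)^-1
        = \sum_(i < n.+1) ((i.+1)%:R ^+ 2 : R)^-1.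
  rewrite (reindex_inj rev_ord_inj) /=; apply: eq_bigr => i _.
  by rewrite subSS subKn // leq_ord.
have hs := inv_sq_sum R n.+1.
set X := \sum_(i < n.+1) _ in hs *.
have hX : X <= 2.
  apply: le_trans hs _; rewrite lerBlDr lerDl divr_ge0 // ler0n.
have h2 : 0 <= 2 / ((n.+2%:R : R) ^+ 2) by rewrite divr_ge0 // exprn_ge0 // ler0n.
apply: le_trans (ler_wpM2l h2 (lerD hX hX)) _.
rewrite le_eqVlt; apply/orP; left; apply/eqP; ring.
Qed.
Section Bounds.
Variables (R : realType) (N : nat) (A : 'M[R]_N) (q : 'I_N).
Hypothesis huniq : forall k, k != q -> strength A k != strength A q.

Local Notation lam := (lam A q).
Local Notation vec := (vec A q).
Local Notation gg := (gg A q).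
Local Notation dd := (dd A).

Lemma vec_q n : vec n q = (n == 0%N)%:R.
Proof. by case: n => [|n]; rewrite ?vec0 ?vecS /gg eqxx ?mul0r. Qed.

Lemma vec0_neq k : k != q -> vec 0 k = 0.
Proof. by move=> /negbTE h; rewrite vec0 h. Qed.

Lemma gg_inv k : k != q -> (dd q - dd k) * gg k = 1.
Proof.
move=> kq; rewrite /gg (negbTE kq) mulfV // subr_eq0 eq_sym.
exact: huniq.
Qed.

Definition conv p k := \sum_(m < p.+1) lam m * vec (p - m)%N k.

Lemma conv_rec p k : k != q ->
  (dd q - dd k) * vec p k =
  (if p is p'.+1 then \sum_j vec p' j * A j k else 0) - conv p k.
Proof.
move=> kq; rewrite /conv; case: p => [|n].
  by rewrite big_ord1 lam0 mul0r vec0_neq // mulr0 subrr.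
rewrite vecS mulrA gg_inv // mul1r; congr (_ - _).
rewrite big_ord_recl lam0 mul0r add0r big_ord_recr /= subnn vec0_neq // mulr0 addr0.
by apply: eq_bigr => i _; rewrite /bump /= add1n subSS.
Qed.

Definition Sc (j : 'I_N) : R := \sum_i `|A i j|.
Definition GG : R := \sum_k `|gg k| * (Sc k + Sc q).
Definition KK : R := 8 * GG.
Definition cc (n : nat) : R := KK ^+ n / ((n.+1)%:R ^+ 2).

Lemma Sc_ge0 j : 0 <= Sc j. Proof. by apply: sumr_ge0 => i _. Qed.
Lemma GG_ge0 : 0 <= GG.
Proof. by apply: sumr_ge0 => k _; rewrite mulr_ge0 // addr_ge0 // Sc_ge0. Qed.
Lemma KK_ge0 : 0 <= KK. Proof. by rewrite mulr_ge0 // GG_ge0. Qed.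
Lemma cc_ge0 n : 0 <= cc n.
Proof. by rewrite divr_ge0 // exprn_ge0 // ?KK_ge0 // ler0n. Qed.
Lemma cc0 : cc 0 = 1. Proof. by rewrite /cc expr0 expr1n invr1 mulr1. Qed.

Lemma GG_ge k : `|gg k| * (Sc k + Sc q) <= GG.
Proof.
rewrite /GG (bigD1 k) //= lerDl; apply: sumr_ge0 => i _.
by rewrite mulr_ge0 // addr_ge0 // Sc_ge0.
Qed.

Lemma cc_conv n : \sum_(m < n.+1) cc m * cc (n - m)%N <= 8 * KK ^+ n / ((n.+2)%:R ^+ 2).
Proof.
have -> : \sum_(m < n.+1) cc m * cc (n - m)%N =
   KK ^+ n * \sum_(m < n.+1) (((m.+1)%:R : R) ^+ 2 * ((n - m).+1)%:R ^+ 2)^-1.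
  rewrite mulr_sumr; apply: eq_bigr => m _.
  by rewrite /cc mulrACA -exprD subnKC ?leq_ord // -invfM.
rewrite [X in _ <= X]mulrAC [X in _ <= X]mulrC.
apply: ler_wpM2l; first by rewrite exprn_ge0 // KK_ge0.
exact: key_sum.
Qed.

Lemma sum_abs_le (f : 'I_N -> R) (c : R) k :
  (forall j, `|f j| <= c) -> `|\sum_j f j * A j k| <= c * Sc k.
Proof.
move=> hf; apply: le_trans (ler_norm_sum _ _ _) _.
rewrite /Sc mulr_sumr; apply: ler_sum => j _.
by rewrite normrM; apply: ler_wpM2r.
Qed.

Lemma bounds n : (forall k, `|vec n k| <= cc n).
Proof.
elim: n {-2}n (leqnn n) => [|n IH] m.
  rewrite leqn0 => /eqP -> k; rewrite cc0 vec0.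
  by case: (k == q); rewrite ?normr1 ?normr0.
rewrite leq_eqVlt => /orP[/eqP ->|]; last by rewrite ltnS; apply: IH.
move=> k; rewrite vecS normrM.
have hl : forall m, (m <= n)%N -> `|lam m.+1| <= Sc q * cc m.
  move=> m' hm'; rewrite lamS mulrC; apply: sum_abs_le => j; exact: IH.
have e1 : `|\sum_j vec n j * A j k| <= Sc k * (cc n * cc 0).
  by rewrite cc0 mulr1 mulrC; apply: sum_abs_le => j; exact: IH.
have e2 : `|\sum_(m0 < n) lam m0.+1 * vec (n - m0)%N k| <=
     Sc q * \sum_(m0 < n) cc m0 * cc (n - m0)%N.
  apply: le_trans (ler_norm_sum _ _ _) _; rewrite mulr_sumr; apply: ler_sum => i _.
  rewrite normrM mulrA; apply: ler_pM => //.
    by apply: hl; apply: ltnW.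
  by apply: IH; apply: leq_subr.
have e3 : `|\sum_j vec n j * A j k - \sum_(m0 < n) lam m0.+1 * vec (n - m0)%N k|
   <= (Sc k + Sc q) * \sum_(m0 < n.+1) cc m0 * cc (n - m0)%N.
  apply: le_trans (ler_normB _ _) _.
  rewrite big_ord_recr /= subnn.
  apply: le_trans (lerD e1 e2) _.
  have h1 := Sc_ge0 k; have h2 := Sc_ge0 q.
  have h3 : 0 <= cc n * cc 0 by rewrite mulr_ge0 // cc_ge0.
  have h4 : 0 <= \sum_(m0 < n) cc m0 * cc (n - m0)%N.
    by apply: sumr_ge0 => i _; rewrite mulr_ge0 // cc_ge0.
  move: h1 h2 h3 h4.
  set a := Sc k; set b := Sc q; set x := cc n * cc 0; set y := \sum_(_ < _) _.
  move=> h1 h2 h3 h4.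
  nra.
apply: le_trans (ler_wpM2l (normr_ge0 _) e3) _.
rewrite mulrA.
apply: le_trans (ler_pM (mulr_ge0 (normr_ge0 _) (addr_ge0 (Sc_ge0 _) (Sc_ge0 _))) _ (GG_ge k) (cc_conv n)) _.
  by apply: sumr_ge0 => i _; rewrite mulr_ge0 // cc_ge0.
rewrite /cc [KK ^+ n.+1]exprS le_eqVlt; apply/orP; left; apply/eqP; rewrite /KK; ring.
Qed.

Lemma lam_bound n : `|lam n.+1| <= Sc q * cc n.
Proof. by rewrite lamS mulrC; apply: sum_abs_le => j; apply: bounds. Qed.
End Bounds.
Section Ident.
Variables (R : realType) (N : nat) (A : 'M[R]_N) (q : 'I_N).
Hypothesis huniq : forall k, k != q -> strength A k != strength A q.
Variable z : R.

Local Notation lam := (lam A q).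
Local Notation vec := (vec A q).
Local Notation gg := (gg A q).
Local Notation dd := (dd A).
Local Notation conv := (conv A q).

Lemma serE (u : nat -> R) n : series u n = \sum_(i < n) u i.
Proof. by rewrite /series /= big_mkord. Qed.

Definition ss n := series (fun i => lam i * z ^+ i) n.
Definition ww k n := series (fun i => vec i k * z ^+ i) n.

Lemma shift_id n k :
  \sum_(i < n) (\sum_j vec i j * A j k) * z ^+ i.+1 = z * \sum_j ww j n * A j k.
Proof.
rewrite /ww mulr_sumr.
under [RHS]eq_bigr do rewrite serE mulr_suml mulr_sumr.
rewrite exchange_big /=; apply: eq_bigr => i _.
rewrite mulr_suml; apply: eq_bigr => j _.
by rewrite exprS; ring.
Qed.

Lemma I1 n : ss n.+1 = z * \sum_j ww j n * A j q.
Proof.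
rewrite /ss serE big_ord_recl lam0 mul0r add0r -shift_id.
by apply: eq_bigr => i _; rewrite lift0 lamS.
Qed.

Lemma I2 n k : k != q ->
  (dd q - dd k) * ww k n.+1 = z * \sum_j ww j n * A j k
       - \sum_(p < n.+1) conv p k * z ^+ p.
Proof.
move=> kq; rewrite /ww serE mulr_sumr.
under eq_bigr do rewrite mulrA conv_rec //.
rewrite -shift_id big_ord_recl /= sub0r mulNr.
have b0 : forall i, bump 0 i = i.+1 by [].
under eq_bigr do rewrite add0n b0 mulrBl.
rewrite sumrB big_ord_recl /= opprD; ring.
Qed.

Local Notation Sc := (Sc A).
Local Notation KK := (KK A q).
Local Notation cc := (cc A q).

Lemma cabs_bound m k :
  \sum_(j < m.+2) `|lam j| * `|vec (m.+1 - j)%N k| <= 8 * Sc q * KK ^+ m / (m.+2)%:R ^+ 2.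
Proof.
rewrite big_ord_recl lam0 normr0 mul0r add0r.
have b0 : forall i, bump 0 i = i.+1 by [].
under eq_bigr do rewrite lift0 subSS.
apply: le_trans (_ : \sum_(i < m.+1) Sc q * (cc i * cc (m - i)%N) <= _).
  apply: ler_sum => i _; rewrite mulrA; apply: ler_pM => //.
    exact: lam_bound.
  exact: bounds.
rewrite -mulr_sumr [8 * Sc q]mulrC -!mulrA; apply: ler_wpM2l; first exact: Sc_ge0.
by rewrite mulrA; apply: cc_conv.
Qed.

Hypothesis hz : (KK + 1) * `|z| <= 1.

Lemma I3 n k :
  `|ss n.+1 * ww k n.+1 - \sum_(p < n.+1) conv p k * z ^+ p|
     <= 8 * Sc q * ((KK + 1) * `|z|) ^+ n.+1.
Proof.
set Lp := \poly_(i < n.+1) lam i.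
set Vp := \poly_(i < n.+1) vec i k.
have eL : ss n.+1 = Lp.[z] by rewrite /ss serE horner_poly.
have eV : ww k n.+1 = Vp.[z] by rewrite /ww serE horner_poly.
rewrite eL eV -hornerM (@horner_coef_wide _ (n.+1 + n)%N); last first.
  apply: leq_trans (size_mul_leq _ _) _.
  have h1 := size_poly n.+1 (fun i => lam i).
  have h2 := size_poly n.+1 (fun i => vec i k).
  rewrite -/Lp -/Vp in h1 h2.
  move: h1 h2; set a := size Lp; set b := size Vp => h1 h2.
  lia.
rewrite big_split_ord /=.
have -> : \sum_(i < n.+1) (Lp * Vp)`_(lshift n i) * z ^+ lshift n i
        = \sum_(p < n.+1) conv p k * z ^+ p.
  apply: eq_bigr => i _; rewrite /= coefM /conv; congr (_ * _).
  apply: eq_bigr => j _; rewrite !coef_poly.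
  have hi := ltn_ord i; have hj := ltn_ord j.
  rewrite ifT; last by apply: leq_ltn_trans hi; rewrite -ltnS.
  rewrite ifT //; apply: leq_ltn_trans hi; exact: leq_subr.
rewrite addrAC subrr add0r.
set t := (KK + 1) * `|z|.
have KK0 := KK_ge0 A q.
have t0 : 0 <= t by rewrite mulr_ge0 // addr_ge0.
have C0 : 0 <= 8 * Sc q by rewrite mulr_ge0 // Sc_ge0.
apply: le_trans (ler_norm_sum _ _ _) _.
apply: le_trans (_ : \sum_(i < n) 8 * Sc q * t ^+ n.+1 / (n.+1)%:R <= _).
  apply: ler_sum => i _.
  rewrite normrM normrX.
  have hc : `|(Lp * Vp)`_(n.+1 + i)| <= 8 * Sc q * KK ^+ (n + i) / (n + i).+2%:R ^+ 2.
    apply: le_trans (_ : \sum_(j < (n + i).+2) `|lam j| * `|vec ((n + i).+1 - j)%N k| <= _);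
      last exact: cabs_bound.
    rewrite coefM addSn; apply: le_trans (ler_norm_sum _ _ _) _.
    apply: ler_sum => j _; rewrite normrM !coef_poly.
    by apply: ler_pM => //; case: ifP; rewrite ?normr0 ?normr_ge0.
  apply: le_trans (ler_wpM2r (exprn_ge0 _ (normr_ge0 _)) hc) _.
  have e1 : KK ^+ (n + i) * `|z| ^+ (n.+1 + i) <= t ^+ n.+1.
    apply: le_trans (_ : t ^+ (n.+1 + i) <= _); last first.
      by apply: ler_wiXn2l => //; apply: leq_addr.
    rewrite /t [X in _ <= X]exprMn; apply: ler_wpM2r; first by rewrite exprn_ge0.
    apply: le_trans (_ : (KK + 1) ^+ (n + i) <= _).
      by apply: lerXn2r; rewrite ?nnegrE ?addr_ge0 // lerDl.
    apply: ler_weXn2l; first by rewrite lerDr.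
    by rewrite addSn.
  have e2 : ((n + i).+2%:R ^+ 2 : R)^-1 <= (n.+1%:R)^-1.
    rewrite lef_pV2 ?posrE ?exprn_gt0 ?ltr0n //.
    apply: le_trans (_ : (n + i).+2%:R <= _).
      by rewrite ler_nat; lia.
    rewrite expr2 ler_peMl ?ler0n // ler1n //.
  rewrite -!mulrA; apply: ler_wpM2l => //; apply: ler_wpM2l; first exact: Sc_ge0.
  rewrite mulrCA [X in _ <= X]mulrC; apply: ler_pM => //.
  by rewrite mulr_ge0 // exprn_ge0 // normr_ge0.
set C := 8 * Sc q * t ^+ n.+1.
have hC : 0 <= C by rewrite mulr_ge0 // exprn_ge0.
rewrite sumr_const card_ord.
rewrite (_ : C / _ *+ n = C * (n%:R / (n.+1)%:R)); last by rewrite -mulr_natr; ring.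
rewrite -[X in _ <= X]mulr1; apply: ler_wpM2l => //.
by rewrite ler_pdivrMr ?ltr0n // mul1r ler_nat.
Qed.
End Ident.
Section Lim.
Variables (R : realType) (N : nat) (A : 'M[R]_N) (q : 'I_N).
Hypothesis huniq : forall k, k != q -> strength A k != strength A q.
Variable z : R.

Local Notation lam := (lam A q).
Local Notation vec := (vec A q).
Local Notation dd := (dd A).
Local Notation Sc := (Sc A).
Local Notation KK := (KK A q).
Local Notation cc := (cc A q).
Local Notation ss := (ss A q z).
Local Notation ww := (ww A q z).

Hypothesis hz : `|z| < (KK + 1)^-1.

Let t := (KK + 1) * `|z|.
Let KK0 : 0 <= KK := KK_ge0 A q.
Let KK1 : 0 < KK + 1.
Proof. by rewrite ltr_wpDl. Qed.
Let t0 : 0 <= t.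
Proof. by rewrite mulr_ge0 // ltW. Qed.
Let t1 : t < 1.
Proof. by rewrite /t mulrC -ltr_pdivlMr // div1r. Qed.

Lemma cc_le n : cc n <= (KK + 1) ^+ n.
Proof.
apply: le_trans (_ : KK ^+ n <= _).
  rewrite /cc ler_pdivrMr ?exprn_gt0 ?ltr0n // ler_peMr ?exprn_ge0 //.
  by rewrite exprn_ege1 // ler1n.
by apply: lerXn2r; rewrite ?nnegrE ?lerDl // addr_ge0.
Qed.

Lemma cvg_ss : cvgn ss.
Proof.
apply: (@geo_cvg R _ (Sc q) t) => //; first exact: Sc_ge0.
case=> [|n]; first by rewrite lam0 mul0r normr0 mulr_ge0 ?exprn_ge0 // Sc_ge0.
rewrite normrM normrX /t exprMn mulrA.
apply: ler_wpM2r; first by rewrite exprn_ge0.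
apply: le_trans (lam_bound A q n) _.
apply: ler_wpM2l; first exact: Sc_ge0.
apply: le_trans (cc_le n) _.
by apply: ler_weXn2l; [rewrite lerDr | apply: leqnSn].
Qed.

Lemma cvg_ww k : cvgn (ww k).
Proof.
apply: (@geo_cvg R _ 1 t) => // n.
rewrite normrM normrX /t exprMn mul1r.
apply: ler_wpM2r; first by rewrite exprn_ge0.
apply: le_trans (cc_le n); exact: bounds.
Qed.

Definition Ls : R := limn ss.
Definition WW k : R := limn (ww k).

Lemma ss_cvg : ss @ \oo --> Ls. Proof. exact: cvg_ss. Qed.
Lemma ww_cvg k : ww k @ \oo --> WW k. Proof. exact: cvg_ww. Qed.

Lemma ss_cvgS : (fun n => ss n.+1) @ \oo --> Ls.
Proof. by have := ss_cvg; rewrite -cvg_shiftS. Qed.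
Lemma ww_cvgS k : (fun n => ww k n.+1) @ \oo --> WW k.
Proof. by have := @ww_cvg k; rewrite -cvg_shiftS. Qed.

Lemma sumW_cvg k : (fun n => z * \sum_j ww j n * A j k) @ \oo --> z * \sum_j WW j * A j k.
Proof.
apply: cvgMl_tmp; apply: (@cvg_fsum R _ (fun j n => ww j n * A j k)) => j.
exact: cvgMr_tmp (@ww_cvg j).
Qed.

Lemma L1 : Ls = z * \sum_j WW j * A j q.
Proof.
have e : (fun n => z * \sum_j ww j n * A j q) = (fun n => ss n.+1).
  by apply: funext => n; rewrite I1.
have h := @sumW_cvg q; rewrite e in h.
exact: (@cvg_unique _ _ _ _ _ _ ss_cvgS h).
Qed.

Lemma hz' : (KK + 1) * `|z| <= 1.
Proof. exact: ltW. Qed.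

Lemma L2 k : k != q ->
  (dd q - dd k) * WW k - z * \sum_j WW j * A j k + Ls * WW k = 0.
Proof.
move=> kq.
set f := fun n => (dd q - dd k) * ww k n.+1 - z * \sum_j ww j n * A j k + ss n.+1 * ww k n.+1.
have h1 : f @ \oo --> (dd q - dd k) * WW k - z * \sum_j WW j * A j k + Ls * WW k.
  apply: cvgD; first apply: cvgB.
  - exact: cvgMl_tmp (@ww_cvgS k).
  - exact: sumW_cvg.
  - exact: cvgM ss_cvgS (@ww_cvgS k).
have h0 : f @ \oo --> 0.
  apply: (@cvg0_bound R _ (fun n => 8 * Sc q * t ^+ n.+1)).
    move=> n; rewrite /f (I2 huniq) //.
    have -> : forall a b c : R, a - b - a + c = c - b by move=> a b c; ring.
    exact: (I3 hz').
  have -> : (fun n => 8 * Sc q * t ^+ n.+1) = geometric (8 * Sc q * t) t.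
    by apply: funext => n; rewrite /geometric /= exprS mulrA.
  by apply: cvg_geometric; rewrite ger0_norm.
exact: (@cvg_unique _ _ _ _ _ _ h1 h0).
Qed.

Lemma Wq : WW q = 1.
Proof.
have e : (fun n => ww q n.+1) = (fun=> 1).
  apply: funext => n; rewrite /ww serE big_ord_recl vec_q /= expr0 mulr1.
  rewrite big1 ?addr0 // => i _; rewrite vec_q mul0r //.
have h := @ww_cvgS q; rewrite e in h.
have h1 : (fun _ : nat => (1:R)) @ \oo --> (1:R) by apply: cvg_cst.
exact: (@cvg_unique _ _ _ _ _ _ h h1).
Qed.
End Lim.
Lemma eigen_part (R : realType) (N : nat) (A : 'M[R]_N) (q : 'I_N)
  (huniq : forall k, k != q -> strength A k != strength A q) (z : R) :
  `|z| < (KK A q + 1)^-1 ->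
  eigenvalue (pert_mx A z) (strength A q + Ls A q z).
Proof.
move=> hz; apply/eigenvalueP; exists (\row_k WW A q z k).
  apply/rowP => k; rewrite !mxE.
  under eq_bigr do rewrite !mxE.
  rewrite (bigD1 k) //= eqxx mulr1n.
  under eq_bigr => j hj do rewrite (negbTE hj) mulr0n add0r.
  have -> : \sum_(j < N | j != k) WW A q z j * (z * A j k)
     = z * \sum_j WW A q z j * A j k - WW A q z k * (z * A k k).
    rewrite mulr_sumr [in RHS](bigD1 k) //=.
    rewrite [in LHS](eq_bigr (fun j => z * (WW A q z j * A j k))); last by move=> j _; rewrite mulrCA.
    ring.
  have e := L1 hz.
  case: (eqVneq k q) => [->|kq].
    rewrite Wq //; rewrite -e; ring.
  have e2 := L2 huniq hz kq.
  rewrite /dd in e2.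
  set W := WW A q z k in e2 *; set S := \sum_j _ in e2 *.
  set L := Ls A q z in e e2 *.
  have -> : z * S = (strength A q - strength A k) * W + L * W.
    by move/eqP: e2; rewrite addrAC subr_eq0 => /eqP ->.
  ring.
apply/negP => /eqP h.
have := congr1 (fun M : 'rV_N => M 0 q) h; rewrite !mxE Wq //.
by move/eqP; rewrite oner_eq0.
Qed.
Section Coefs.
Variables (R : realType) (N : nat) (A : 'M[R]_N) (q : 'I_N).
Hypothesis hsym : A^T = A.
Hypothesis hdiag : forall j, A j j = 0.

Local Notation lam := (lam A q).
Local Notation vec := (vec A q).
Local Notation gg := (gg A q).

Lemma Asym i j : A i j = A j i.
Proof. by rewrite -[in LHS]hsym mxE. Qed.

Lemma cs1 (F : 'I_N -> R) :
  \sum_(k < N | k != q) F k / (strength A q - strength A k) = \sum_k gg k * F k.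
Proof.
rewrite big_mkcond; apply: eq_bigr => k _; rewrite /gg /dd.
by case: (eqVneq k q) => [->|h]; rewrite ?eqxx ?h /= ?mul0r // mulrC.
Qed.

Lemma cs2 (F G : 'I_N -> R) :
  \sum_(k < N | k != q) (F k / (strength A q - strength A k)) * G k
   = \sum_k gg k * F k * G k.
Proof.
rewrite big_mkcond; apply: eq_bigr => k _; rewrite /gg /dd.
by case: (eqVneq k q) => [->|h]; rewrite ?eqxx ?h /= ?mul0r // [_ * F k]mulrC.
Qed.

Lemma cs3 (F : 'I_N -> R) :
  \sum_(k < N | k != q) F k / (strength A q - strength A k) ^+ 2
   = \sum_k gg k ^+ 2 * F k.
Proof.
rewrite big_mkcond; apply: eq_bigr => k _; rewrite /gg /dd.
by case: (eqVneq k q) => [->|h]; rewrite ?eqxx ?h /= ?expr0n ?mul0r // exprVn mulrC.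
Qed.

Lemma c2E : c2 A q = \sum_k gg k * A k q ^+ 2.
Proof. by rewrite /c2 cs1. Qed.

Lemma c3E : c3 A q = \sum_r gg r * A r q * \sum_k gg k * (A k q * A k r).
Proof.
rewrite /c3 cs2; apply: eq_bigr => r _; by rewrite cs1.
Qed.

Lemma c4E : c4 A q =
  \sum_r gg r * A r q * \sum_l gg l * A r l * \sum_k gg k * (A k q * A k l)
  - (\sum_r gg r ^+ 2 * A r q ^+ 2) * \sum_k gg k * A k q ^+ 2.
Proof.
rewrite /c4 cs2 cs3 cs1; congr (_ - _).
apply: eq_bigr => r _; congr (_ * _); rewrite cs2.
by apply: eq_bigr => l _; rewrite cs1.
Qed.

Lemma lam1 : lam 1 = 0.
Proof.
rewrite lamS (bigD1 q) //= vec0 eqxx mul1r hdiag add0r big1 // => j /negbTE h.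
by rewrite vec0 h mul0r.
Qed.

Lemma vec1 k : vec 1 k = gg k * A q k.
Proof.
rewrite vecS big_ord0 subr0 (bigD1 q) //= vec0 eqxx mul1r big1 ?addr0 // => j /negbTE h.
by rewrite vec0 h mul0r.
Qed.

Lemma vec2 k : vec 2 k = gg k * \sum_j gg j * A q j * A j k.
Proof.
rewrite vecS big_ord1 lam1 mul0r subr0; congr (_ * _).
by apply: eq_bigr => j _; rewrite vec1.
Qed.

Lemma vec3 k : vec 3 k = gg k * (\sum_j vec 2 j * A j k - lam 2 * (gg k * A q k)).
Proof.
by rewrite vecS big_ord_recl big_ord1 /= lam1 mul0r add0r vec1.
Qed.

Lemma lam2E : lam 2 = c2 A q.
Proof.
rewrite lamS c2E; apply: eq_bigr => k _; rewrite vec1 Asym; ring.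
Qed.

Lemma lam3E : lam 3 = c3 A q.
Proof.
rewrite lamS c3E; apply: eq_bigr => r _; rewrite vec2.
rewrite [in RHS]mulr_sumr [in LHS]mulr_sumr mulr_suml.
apply: eq_bigr => k _; rewrite (Asym q k); ring.
Qed.

Lemma lam4E : lam 4 = c4 A q.
Proof.
rewrite lamS c4E -c2E -lam2E.
under eq_bigr do rewrite vec3 mulrBr mulrBl.
rewrite sumrB; congr (_ - _).
  apply: eq_bigr => r _; rewrite (mulrAC (gg r)) -!mulrA; congr (_ * (_ * _)).
  apply: eq_bigr => l _; rewrite vec2 (Asym l r).
  rewrite (eq_bigr (fun k => gg k * (A k q * A k l))); first ring.
  by move=> k _; rewrite (Asym q k); ring.
rewrite mulrC mulr_sumr; apply: eq_bigr => r _; rewrite (Asym q r); ring.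
Qed.
End Coefs.
Section Unweighted.
Variables (R : realType) (N : nat) (A : 'M[R]_N) (q : 'I_N).
Hypothesis hsym : A^T = A.
Hypothesis hdiag : forall j, A j j = 0.
Hypothesis h01 : forall i j, A i j = 0 \/ A i j = 1.

Let s k := strength A k.

Lemma c2_unw : c2 A q = \sum_(k < N | A q k == 1) (strength A q - strength A k)^-1.
Proof.
rewrite /c2 big_mkcond [RHS]big_mkcond; apply: eq_bigr => k _.
case: (eqVneq k q) => [->|kq]; first by rewrite hdiag /= (eq_sym 0) oner_eq0.
rewrite /= (Asym hsym k q).
case: (h01 q k) => ->; first by rewrite (eq_sym 0) oner_eq0 expr0n /= mul0r.
by rewrite eqxx expr1n mul1r.
Qed.

Lemma c3_unw : c3 A q = \sum_(r < N | A q r == 1)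
                \sum_(k < N | (A q k == 1) && (A r k == 1))
                  ((strength A q - strength A r) * (strength A q - strength A k))^-1.
Proof.
rewrite /c3 big_mkcond [RHS]big_mkcond; apply: eq_bigr => r _.
case: (eqVneq r q) => [->|rq]; first by rewrite hdiag /= (eq_sym 0) oner_eq0.
rewrite /= (Asym hsym r q).
case: (h01 q r) => ->; first by rewrite (eq_sym 0) oner_eq0 /= !mul0r.
rewrite eqxx mul1r mulr_sumr big_mkcond [RHS]big_mkcond; apply: eq_bigr => k _.
case: (eqVneq k q) => [->|kq]; first by rewrite hdiag /= (eq_sym 0) oner_eq0.
rewrite /= (Asym hsym k q) (Asym hsym k r).
case: (h01 q k) => ->; first by rewrite (eq_sym 0) oner_eq0 /= !mul0r mulr0.
case: (h01 r k) => ->; first by rewrite (eq_sym 0) oner_eq0 eqxx /= mulr0 mul0r mulr0.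
by rewrite eqxx /= !mul1r invfM.
Qed.
End Unweighted.
Lemma series_part (R : realType) (N : nat) (A : 'M[R]_N) (q : 'I_N) (z : R) :
  `|z| < (KK A q + 1)^-1 ->
  series (fun n => (if n == 0%N then strength A q else lam A q n) * z ^+ n) @ \oo
    --> strength A q + Ls A q z.
Proof.
move=> hz; rewrite -cvg_shiftS.
have e : [sequence series (fun n => (if n == 0%N then strength A q else lam A q n) * z ^+ n) n.+1]_n
   = (fun n => strength A q + ss A q z n.+1).
  apply: funext => n /=; rewrite /ss !serE !big_ord_recl /= lam0 mul0r add0r expr0 mulr1.
  by congr (_ + _); apply: eq_bigr => i _; rewrite lift0.
rewrite e; apply: cvgD; first exact: cvg_cst.
exact: ss_cvgS.
Qed.

Theorem mainTheorem1 (R : realType) (N : nat) (A : 'M[R]_N) (q : 'I_N)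
  (hsym : A^T = A)
  (hnneg : forall i j, 0 <= A i j)
  (hdiag : forall j, A j j = 0)
  (huniq : forall k, k != q -> strength A k != strength A q) :
  (exists (xi : R -> R) (a : nat -> R) (rho : R),
     0 < rho /\
     (forall z : R, `|z| < rho ->
        eigenvalue (pert_mx A z) (xi z) /\
        series (fun n => a n * z ^+ n) @ \oo --> xi z) /\
     xi 0 = strength A q /\
     a 0%N = strength A q /\ a 1%N = 0 /\
     a 2%N = c2 A q /\ a 3%N = c3 A q /\ a 4%N = c4 A q) /\
  ((forall i j, A i j = 0 \/ A i j = 1) ->
     c2 A q = \sum_(k < N | A q k == 1) (strength A q - strength A k)^-1 /\
     c3 A q = \sum_(r < N | A q r == 1)
                \sum_(k < N | (A q k == 1) && (A r k == 1))
                  ((strength A q - strength A r) * (strength A q - strength A k))^-1).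
Proof.
split; last first.
  by move=> h01; split; [exact: c2_unw | exact: c3_unw].
exists (fun z => strength A q + Ls A q z).
exists (fun n => if n == 0%N then strength A q else lam A q n).
exists (KK A q + 1)^-1.
have KK1 : 0 < KK A q + 1 by rewrite ltr_wpDl // KK_ge0.
split; first by rewrite invr_gt0.
split.
  move=> z hz; split; first exact: eigen_part.
  exact: series_part.
split.
  have hz : `|0 : R| < (KK A q + 1)^-1 by rewrite normr0 invr_gt0.
  by rewrite (L1 hz) mul0r addr0.
split; first by [].
split; first exact: lam1.
split; first exact: lam2E.
split; first exact: lam3E.
exact: lam4E.
Qed.
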